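(* Let $\mathbf H$ be a symmetric positive semidefinite $d\times d$ matrix partitioned into diagonal blocks $\mathbf H_{11},\dots,\mathbf H_{LL}$, let $\mathbf B=\mathrm{blkdiag}(\mathbf H_{11},\dots,\mathbf H_{LL})$ and $\mathbf E=\mathbf H-\mathbf B$, and assume $T=\mathrm{Tr}(\mathbf H)>0$ (note $\mathrm{Tr}(\mathbf B)=T$). Let $\alpha>1$ and $\Lambda_*=\max\{\lambda_{\max}(\mathbf H),\lambda_{\max}(\mathbf B)\}$. Then $$\big|\widetilde{\mathcal R}_\alpha(\mathbf H)-\widetilde{\mathcal R}_\alpha(\mathbf B)\big|\le\alpha\Big(\frac{\Lambda_*}{T}\Big)^{\alpha-1}\frac{\sqrt d\,\|\mathbf E\|_F}{T}.$$
   Context: For a symmetric positive semidefinite matrix $\mathbf M$ with eigenvalues $\lambda_1,\dots,\lambda_m\ge0$ and $\mathrm{Tr}(\mathbf M)>0$, $\widetilde{\mathcal R}_\alpha(\mathbf M)=\sum_{i=1}^m(\lambda_i/\mathrm{Tr}(\mathbf M))^\alpha$ (with $0^\alpha=0$). $\|\cdot\|_F$ is the Frobenius norm. *)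

(* Defs.v *)
From HB Require Import structures.
From mathcomp Require Import all_boot all_order all_algebra.
From mathcomp Require Import all_classical all_reals all_analysis.
Set Implicit Arguments. Unset Strict Implicit. Unset Printing Implicit Defensive.
Import Order.TTheory GRing.Theory Num.Theory.
Local Open Scope ring_scope.

Section Defs.
Variable R : realType.

Definition psd (d : nat) (M : 'M[R]_d) : Prop :=
  M^T = M /\ forall v : 'cV[R]_d, 0 <= (v^T *m M *m v) 0 0.

(* s is the list of eigenvalues of M counted with (algebraic) multiplicity:
   the characteristic polynomial splits with exactly these roots *)
Definition eigvals_of (d : nat) (M : 'M[R]_d) (s : seq R) : Prop :=
  char_poly M = \prod_(x <- s) ('X - x%:P).

(* largest element of a list of (nonnegative) reals; 0 for the empty list *)
Definition lmax (s : seq R) : R := \big[Num.max/0]_(x <- s) x.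

(* normalized Renyi quantity computed from the eigenvalue list s and trace t;
   powR satisfies 0 `^ a = 0 for a <> 0 *)
Definition renyi_tilde (alpha : R) (s : seq R) (t : R) : R :=
  \sum_(x <- s) powR (x / t) alpha.

Definition blkdiag_part (d L : nat) (blk : 'I_d -> 'I_L) (M : 'M[R]_d) : 'M[R]_d :=
  \matrix_(i, j) (if blk i == blk j then M i j else 0).

Definition frob (m n : nat) (M : 'M[R]_(m, n)) : R :=
  Num.sqrt (\sum_i \sum_j (M i j) ^+ 2).

End Defs.

(* Main.v *)
Require Import Defs.
From HB Require Import structures.
From mathcomp Require Import all_boot all_order all_algebra.
From mathcomp Require Import all_classical all_reals all_analysis.
From mathcomp Require Import complex ring lra.
Import Order.TTheory GRing.Theory Num.Theory numFieldNormedType.Exports.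
Local Open Scope ring_scope.
Set Implicit Arguments. Unset Strict Implicit. Unset Printing Implicit Defensive.

Section S.
Variable R : realType.

Lemma powR_lip_lt (a u v : R) : 1 < a -> 0 < v -> v < u ->
  u `^ a - v `^ a <= a * u `^ (a - 1) * (u - v).
Proof.
move=> a1 v0 vu.
have cont : {within [set` `[v, u]%R], continuous (fun x => powR x a)}%classic.
  apply: derivable_within_continuous => x; rewrite in_itv /= => /andP[vx _].
  apply: derivable_powR; rewrite in_itv /= andbT; exact: lt_le_trans vx.
have [c cin ->] := @MVT R (fun x => powR x a) (fun x => a * x `^ (a - 1)) v u vu
  (fun x xin => (is_derive1_powR (x:=x) a) (lt_trans v0 (andP (xin : _ \in _)).1)) cont.
move: cin; rewrite in_itv /= => /andP[vc cu].
have c0 : 0 < c by exact: lt_trans vc.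
rewrite ler_pM2r ?subr_gt0 // ler_pM2l ?(lt_trans _ a1) //.
apply: ge0_ler_powR; rewrite ?subr_ge0 ?ltW // ?nnegrE ?ltW //.
exact: lt_trans cu.
Qed.

Lemma powR_lip (a m u v : R) : 1 < a -> 0 <= u <= m -> 0 <= v <= m ->
  `|u `^ a - v `^ a| <= a * m `^ (a - 1) * `|u - v|.
Proof.
move=> a1.
have a0 : 0 < a by exact: lt_trans a1.
have K : forall u v, 0 <= v <= u -> u <= m ->
    `|u `^ a - v `^ a| <= a * m `^ (a - 1) * `|u - v|.
  move=> {}u {}v /andP[v0 vu] um.
  have u0 : 0 <= u by exact: le_trans vu.
  have mono : v `^ a <= u `^ a.
    by apply: (ge0_ler_powR (ltW a0)); rewrite ?nnegrE.
  have um1 : u `^ (a - 1) <= m `^ (a - 1).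
    apply: ge0_ler_powR; [by rewrite subr_ge0 ltW|by rewrite nnegrE|by rewrite nnegrE (le_trans u0)|done].
  rewrite !ger0_norm ?subr_ge0 //.
  have [->|vu'] := eqVneq v u; first by rewrite !subrr mulr0.
  have ltvu : v < u by rewrite lt_neqAle vu'.
  have [->|v0'] := eqVneq v 0.
    rewrite powR0 ?gt_eqF // !subr0 -(mulr_powRB1 u0 a0) mulrC.
    apply: ler_wpM2r => //; apply: le_trans um1 _.
    by rewrite ler_peMl ?powR_ge0 ?ltW.
  have vpos : 0 < v by rewrite lt_neqAle eq_sym v0'.
  have H1 := @powR_lip_lt a u v a1 vpos ltvu.

  apply: (le_trans H1).
  rewrite ler_pM2r ?subr_gt0 // ler_pM2l //.
move=> /andP[u0 um] /andP[v0 vm].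
have [vu|uv] := leP v u; first by apply: K; rewrite ?v0.
rewrite distrC [`|u - v|]distrC; apply: K => //; by rewrite u0 ltW.
Qed.
Lemma wcs (I : finType) (w z : I -> R) : (forall i, 0 <= w i) ->
  (\sum_i w i * z i) ^+ 2 <= (\sum_i w i) * (\sum_i w i * z i ^+ 2).
Proof.
move=> w0.
set W := \sum_i w i; set A := \sum_i w i * z i; set Q := \sum_i w i * z i ^+ 2.
have W0 : 0 <= W by apply: sumr_ge0.
have key : 0 <= \sum_i w i * (W * z i - A) ^+ 2.
  by apply: sumr_ge0 => i _; rewrite mulr_ge0 ?sqr_ge0.
have E : \sum_i w i * (W * z i - A) ^+ 2 = W * (W * Q - A ^+ 2).
  rewrite (eq_bigr (fun i => W ^+ 2 * (w i * z i ^+ 2) - (2 * W * A) * (w i * z i) + A ^+ 2 * w i)); last first.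
    by move=> i _; ring.
  rewrite !big_split /= -!big_distrr /= -/W -/A -/Q sumrN -mulr_sumr -/A; ring.
rewrite E in key.
have [W0'|Wpos] := eqVneq W 0.
  have w_0 : forall i, w i = 0.
    by move=> i; exact: (psumr_eq0P (fun i _ => w0 i) W0').
  rewrite /A big1; first by rewrite expr0n /= W0' mul0r.
  by move=> i _; rewrite w_0 mul0r.
have Wp : 0 < W by rewrite lt_neqAle eq_sym Wpos.
by move: key; rewrite pmulr_rge0 // subr_ge0.

Qed.

Lemma key_real (n : nat) (x y : 'I_n -> R) (S : 'I_n -> 'I_n -> R) (a M T : R) :
  (forall i k, 0 <= S i k) -> (forall i, \sum_k S i k = 1) ->
  (forall k, \sum_i S i k = 1) ->
  (forall k, 0 <= x k <= M) -> (forall i, 0 <= y i <= M) -> 0 < T -> 1 < a ->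
  `| \sum_k powR (x k / T) a - \sum_i powR (y i / T) a |
   <= a * powR (M / T) (a - 1) *
      (Num.sqrt n%:R * Num.sqrt (\sum_i \sum_k S i k * (x k - y i) ^+ 2) / T).
Proof.
move=> S0 Srow Scol xM yM T0 a1.
set c := a * powR (M / T) (a - 1).
have c0 : 0 <= c by rewrite mulr_ge0 ?powR_ge0 // ltW // (lt_trans _ a1).
have E1 : \sum_k powR (x k / T) a = \sum_i \sum_k S i k * powR (x k / T) a.
  rewrite exchange_big /=; apply: eq_bigr => k _.
  by rewrite -mulr_suml Scol mul1r.
have E2 : \sum_i powR (y i / T) a = \sum_i \sum_k S i k * powR (y i / T) a.
  by apply: eq_bigr => i _; rewrite -mulr_suml Srow mul1r.
rewrite E1 E2 -sumrB.
set A := \sum_i \sum_k S i k * `|x k - y i|.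
have step : `|\sum_i (\sum_k S i k * powR (x k / T) a - \sum_k S i k * powR (y i / T) a)|
    <= c / T * A.
  apply: le_trans (ler_norm_sum _ _ _) _.
  rewrite /A mulr_sumr; apply: ler_sum => i _.
  rewrite -sumrB; apply: le_trans (ler_norm_sum _ _ _) _.
  rewrite mulr_sumr; apply: ler_sum => k _.
  rewrite -mulrBr normrM ger0_norm // mulrCA; apply: ler_wpM2l => //.
  have Tinv : 0 < T^-1 by rewrite invr_gt0.
  have /andP[xk0 xkM] := xM k; have /andP[yi0 yiM] := yM i.
  have H := @powR_lip a (M / T) (x k / T) (y i / T) a1.
  have c1 : 0 <= x k / T <= M / T by rewrite divr_ge0 ?(ltW T0) //= ler_pM2r.
  have c2 : 0 <= y i / T <= M / T by rewrite divr_ge0 ?(ltW T0) //= ler_pM2r.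
  apply: le_trans (H c1 c2) _.
  by rewrite -mulrBl normrM (gtr0_norm Tinv) -/c mulrA mulrAC.
apply: le_trans step _.
rewrite -mulrA ler_wpM2l // mulrC ler_wpM2r ?invr_ge0 ?(ltW T0) //.
have wc := @wcs _ (fun p : 'I_n * 'I_n => S p.1 p.2) (fun p => `|x p.2 - y p.1|) (fun p => S0 p.1 p.2).
have P1 : \sum_(p : 'I_n * 'I_n) S p.1 p.2 * `|x p.2 - y p.1| = A by rewrite /A pair_bigA.
have P2 : \sum_(p : 'I_n * 'I_n) S p.1 p.2 = \sum_i \sum_k S i k by rewrite pair_bigA.
have P3 : \sum_(p : 'I_n * 'I_n) S p.1 p.2 * `|x p.2 - y p.1| ^+ 2 = \sum_i \sum_k S i k * (x k - y i) ^+ 2.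
  by rewrite pair_bigA /=; apply: eq_bigr => p _; rewrite real_normK ?num_real.
rewrite P1 P2 P3 in wc.
have Wn : \sum_i \sum_k S i k = n%:R.
  by rewrite (eq_bigr (fun=> 1)) ?sumr_const ?card_ord // => i _; rewrite Srow.
rewrite Wn in wc.
rewrite -sqrtrM ?ler0n //.
have A0 : 0 <= A by rewrite /A; apply: sumr_ge0 => i _; apply: sumr_ge0 => k _; rewrite mulr_ge0.
rewrite -(ger0_norm A0) -sqrtr_sqr; exact: ler_wsqrtr.
Qed.
End S.
Lemma char_poly_similar (F : fieldType) n (P D : 'M[F]_n) : P \in unitmx ->
  char_poly (invmx P *m D *m P) = char_poly D.
Proof.
move=> Pu; rewrite /char_poly /char_poly_mx.
have e : 'X%:M - map_mx polyC (invmx P *m D *m P) =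
    map_mx polyC (invmx P) *m ('X%:M - map_mx polyC D) *m map_mx polyC P.
  rewrite mulmxBr mulmxBl !map_mxM; congr (_ - _).
  by rewrite scalar_mxC -mulmxA -map_mxM mulVmx // map_mx1 mulmx1.
rewrite e !det_mulmx mulrC mulrA -det_mulmx -map_mxM mulmxV // map_mx1 det1 mul1r //.
Qed.

Section Spec.
Variable R : realType.
Local Open Scope sesquilinear_scope.
Import Num.Def.

Lemma spec n (A : 'M[R]_n) (s : seq R) : A^T = A ->
  char_poly A = \prod_(x <- s) ('X - x%:P) ->
  exists P : 'M[R[i]]_n, exists xs : 'I_n -> R,
   [/\ P \is unitarymx,
       map_mx (real_complex R) A = P^t* *m diag_mx (\row_i real_complex R (xs i)) *m P
     & perm_eq s [seq xs i | i <- enum 'I_n]].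
Proof.
move=> Asym Achar.
set Ac := map_mx (real_complex R) A.
have AcT : Ac^t* = Ac.
  apply/matrixP => i j; rewrite !mxE.
  have -> : conjC (real_complex R (A j i)) = real_complex R (A j i) := conjc_real _.
  by have /matrixP /(_ j i) := Asym; rewrite mxE => ->.
have Anorm : Ac \is normalmx by apply/normalmxP; rewrite AcT.
have Aeq := orthomx_spectralP Anorm.
set P := spectralmx Ac in Aeq; set sp := spectral_diag Ac in Aeq.
have Pu : P \is unitarymx by apply: spectral_unitarymx.
have ch : char_poly Ac = \prod_(z <- [seq sp 0 i | i <- enum 'I_n]) ('X - z%:P).
  rewrite Aeq char_poly_similar ?unitarymx_unit // char_poly_trig ?diag_mx_is_trig //.
  rewrite big_map big_enum /=; apply: eq_bigr => i _; by rewrite mxE eqxx mulr1n.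
have ch2 : char_poly Ac = \prod_(z <- [seq real_complex R x | x <- s]) ('X - z%:P).
  rewrite -map_char_poly Achar rmorph_prod big_map; apply: eq_bigr => x _.
  exact: map_polyXsubC.
have pe := prod_XsubC_eq (etrans (esym ch2) ch).
set xs := fun i => complex.Re (sp 0 i).
have spR : forall i, sp 0 i = real_complex R (xs i).
  move=> i; have : sp 0 i \in [seq real_complex R x | x <- s].
    by rewrite (perm_mem pe); apply: map_f; rewrite mem_enum.
  by case/mapP => x _ e; rewrite /xs e.
have spE : [seq sp 0 i | i <- enum 'I_n] = [seq real_complex R x | x <- [seq xs i | i <- enum 'I_n]].
  by rewrite -[RHS]map_comp; apply/eq_in_map => i iin /=.
exists P, xs; split => //.
  rewrite -invmx_unitary // {1}Aeq; congr (_ *m _ *m _); congr diag_mx.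
  by apply/rowP => i; rewrite mxE.
by apply: (perm_map_inj (@complexI R)); rewrite -spE.
Qed.
End Spec.
Section TR.
Local Open Scope sesquilinear_scope.
Import Num.Def.

Lemma diag_conj_entry (C : numClosedFieldType) n (W : 'M[C]_n) (d : 'rV[C]_n) i :
  (W *m diag_mx d *m W^t*) i i = \sum_k W i k * (W i k)^* * d 0 k.
Proof.
rewrite mul_mx_diag !mxE; apply: eq_bigr => k _; rewrite !mxE; ring.
Qed.

Lemma trace_id (C : numClosedFieldType) n (W : 'M[C]_n) (dx dy : 'rV[C]_n) :
  W *m W^t* = 1%:M -> W^t* *m W = 1%:M -> dx ^ conjC = dx -> dy ^ conjC = dy ->
  let N := W *m diag_mx dx *m W^t* - diag_mx dy in
  \tr (N *m N^t*) = \sum_i \sum_k W i k * (W i k)^* * (dx 0 k - dy 0 i) ^+ 2.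
Proof.
move=> WW WsW dxr dyr N.
set G := W *m diag_mx dx *m W^t*.
have Gs : G^t* = G.
  by rewrite /G !trmx_mul !map_mxM trmxCK tr_diag_mx map_diag_mx dxr mulmxA.
have Ns : N^t* = N.
  by rewrite /N linearB /= map_mxB Gs tr_diag_mx map_diag_mx dyr.
have GG : G *m G = W *m diag_mx (\row_k (dx 0 k * dx 0 k)) *m W^t*.
  rewrite /G -mulmx_diag !mulmxA; congr (_ *m _).
  by rewrite -[W *m _ *m _ *m W]mulmxA WsW mulmx1.
rewrite Ns /N mulmxBl !mulmxBr !raddfB /= GG.
rewrite [\tr (diag_mx dy *m G)]mxtrace_mulC mulmx_diag !mxtrace_diag.
rewrite /mxtrace.
have row : forall i, \sum_k W i k * (W i k)^* = 1.
  move=> i; have := congr1 (fun M : 'M[C]_n => M i i) WW; rewrite /= !mxE eqxx mulr1n => <-.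
  by apply: eq_bigr => k _; rewrite !mxE.
have inner : forall i, \sum_k W i k * (W i k)^* * (dx 0 k - dy 0 i) ^+ 2 =
   \sum_k W i k * (W i k)^* * (dx 0 k * dx 0 k)
   - 2 * ((\sum_k W i k * (W i k)^* * dx 0 k) * dy 0 i) + dy 0 i * dy 0 i.
  move=> i.
  rewrite (eq_bigr (fun k => W i k * (W i k)^* * (dx 0 k * dx 0 k)
     - 2 * (W i k * (W i k)^* * dx 0 k * dy 0 i) + W i k * (W i k)^* * (dy 0 i * dy 0 i))); last first.
    by move=> k _; ring.
  rewrite !big_split /= sumrN -!mulr_sumr -!mulr_suml row mul1r //.
under [RHS]eq_bigr => i _ do rewrite inner.
rewrite !big_split /= sumrN -!mulr_sumr.
have T1 : \sum_i (W *m diag_mx (\row_k (dx 0 k * dx 0 k)) *m W^t*) i i =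
    \sum_i \sum_k W i k * (W i k)^* * (dx 0 k * dx 0 k).
  by apply: eq_bigr => i _; rewrite diag_conj_entry; apply: eq_bigr => k _; rewrite mxE.
have T2 : \sum_i (W *m diag_mx dx *m W^t* *m diag_mx dy) i i =
    \sum_i (\sum_k W i k * (W i k)^* * dx 0 k) * dy 0 i.
  by apply: eq_bigr => i _; rewrite mul_mx_diag mxE diag_conj_entry.
have T3 : \sum_j (\row_j0 (dy 0 j0 * dy 0 j0)) 0 j = \sum_i dy 0 i * dy 0 i.
  by apply: eq_bigr => i _; rewrite mxE.
rewrite /G T1 T2 T3.
ring.
Qed.
End TR.

Section Helpers.
Variable R : realType.

Lemma lmax_ge (s : seq R) x : x \in s -> x <= lmax s.
Proof.
rewrite /lmax; elim: s => [//|y s IH]; rewrite inE big_cons => /orP[/eqP->|xs].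
  by rewrite le_max lexx.
by rewrite le_max (IH xs) orbT.
Qed.

Lemma lmax_ge0 (s : seq R) : 0 <= lmax s.
Proof.
rewrite /lmax; elim: s => [|y s IH]; first by rewrite big_nil.
by rewrite big_cons le_max IH orbT.
Qed.

Lemma eig_nonneg n (A : 'M[R]_n) (s : seq R) x :
  (forall v : 'rV[R]_n, 0 <= (v *m A *m v^T) 0 0) ->
  char_poly A = \prod_(y <- s) ('X - y%:P) -> x \in s -> 0 <= x.
Proof.
move=> Apsd Ach xs.
have : eigenvalue A x by rewrite eigenvalue_root_char Ach root_prod_XsubC.
case/eigenvalueP => v vA vne0.
have := Apsd v; rewrite vA -scalemxAl mxE.
have pos : 0 < (v *m v^T) 0 0.
  rewrite mxE lt_neqAle eq_sym; apply/andP; split; last first.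
    by apply: sumr_ge0 => j _; rewrite mxE -expr2 sqr_ge0.
  apply/negP => /eqP h; apply/negP: vne0; rewrite negbK; apply/eqP/rowP => j.
  have nn : forall k : 'I_n, true -> 0 <= v 0 k * v^T k 0.
    by move=> k _; rewrite mxE -expr2 sqr_ge0.
  have := psumr_eq0P nn h (i:=j) isT.
  by rewrite mxE -expr2 => /eqP; rewrite sqrf_eq0 mxE => /eqP ->.
by rewrite pmulr_lge0.
Qed.

Lemma qform n (M : 'M[R]_n) (x y : 'cV[R]_n) :
  (x^T *m M *m y) 0 0 = \sum_i \sum_j x i 0 * M i j * y j 0.
Proof.
rewrite mxE exchange_big /=; apply: eq_bigr => j _.
by rewrite mxE mulr_suml; apply: eq_bigr => i _; rewrite !mxE.
Qed.

Lemma blk_psd d L (blk : 'I_d -> 'I_L) (H : 'M[R]_d) : psd H ->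
  forall v : 'rV[R]_d, 0 <= (v *m blkdiag_part blk H *m v^T) 0 0.
Proof.
move=> [_ Hp] v.
rewrite -{1}(trmxK v) qform.
set c := fun l : 'I_L => \col_i (if blk i == l then v 0 i else 0) : 'cV[R]_d.
have e : \sum_i \sum_j v^T i 0 * blkdiag_part blk H i j * v^T j 0 =
   \sum_l \sum_i \sum_j c l i 0 * H i j * c l j 0.
  rewrite [RHS]exchange_big /=; apply: eq_bigr => i _.
  rewrite [RHS]exchange_big /=; apply: eq_bigr => j _.
  rewrite (bigD1 (blk i)) //= big1 ?addr0; last first.
    by move=> l /negPf lne; rewrite /c !mxE eq_sym lne !mul0r.
  rewrite /c !mxE eqxx; case: (blk i =P blk j) => [->|ne]; first by rewrite eqxx.
  by case: (blk j =P blk i) => [e'|_]; [case: ne|rewrite !mulr0 mul0r].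
rewrite e; apply: sumr_ge0 => l _; rewrite -qform; exact: Hp.
Qed.
End Helpers.

Section Frob.
Variable R : realType.
Local Open Scope sesquilinear_scope.
Import Num.Def.

Lemma frob_identity n (Hm Bm : 'M[R]_n) (P Q : 'M[R[i]]_n) (xs ys : 'I_n -> R) :
  P \is unitarymx -> Q \is unitarymx ->
  map_mx (real_complex R) Hm = P^t* *m diag_mx (\row_i real_complex R (xs i)) *m P ->
  map_mx (real_complex R) Bm = Q^t* *m diag_mx (\row_i real_complex R (ys i)) *m Q ->
  exists S : 'I_n -> 'I_n -> R,
    [/\ forall i k, 0 <= S i k, forall i, \sum_k S i k = 1,
        forall k, \sum_i S i k = 1 &
        \sum_i \sum_j (Hm - Bm) i j ^+ 2 = \sum_i \sum_k S i k * (xs k - ys i) ^+ 2].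
Proof.
move=> Pu Qu HP BQ.
set W := Q *m P^t*.
have WW : W *m W^t* = 1%:M.
  by apply/unitarymxP; rewrite /W mul_unitarymx // trmxC_unitary.
have WsW : W^t* *m W = 1%:M := mulmx1C WW.
have QQ : Q *m Q^t* = 1%:M by apply/unitarymxP.
have QsQ : Q^t* *m Q = 1%:M := mulmx1C QQ.
set S := fun i k => complex.Re (W i k * (W i k)^*).
have SE : forall i k, real_complex R (S i k) = W i k * (W i k)^*.
  move=> i k; apply: RRe_real; apply: ger0_real; exact: mulcJ_ge0.
exists S; split.
- by move=> i k; rewrite -ler0c SE; exact: mulcJ_ge0.
- move=> i; apply: (@complexI R); rewrite rmorph_sum rmorph1.
  have := congr1 (fun M : 'M[R[i]]_n => M i i) WW; rewrite /= !mxE eqxx mulr1n => <-.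
  by apply: eq_bigr => k _; rewrite SE !mxE.
- move=> k; apply: (@complexI R); rewrite rmorph_sum rmorph1.
  have := congr1 (fun M : 'M[R[i]]_n => M k k) WsW; rewrite /= !mxE eqxx mulr1n => <-.
  by apply: eq_bigr => i _; rewrite SE !mxE mulrC.
apply: (@complexI R).
have cr : forall x : R, conjC (real_complex R x) = real_complex R x := fun x => conjc_real x.
set DX := diag_mx (\row_i real_complex R (xs i)).
set DY := diag_mx (\row_i real_complex R (ys i)).
set Ec := map_mx (real_complex R) (Hm - Bm).
have L1 : real_complex R (\sum_i \sum_j (Hm - Bm) i j ^+ 2) = \tr (Ec *m Ec^t*).
  rewrite rmorph_sum /mxtrace; apply: eq_bigr => i _; rewrite mxE rmorph_sum.
  by apply: eq_bigr => j _; rewrite !mxE cr rmorphXn expr2.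
have EcE : Ec = P^t* *m DX *m P - Q^t* *m DY *m Q by rewrite /Ec map_mxB HP BQ.
set N := Q *m Ec *m Q^t*.
have Ns : N^t* = Q *m Ec^t* *m Q^t* by rewrite /N !trmx_mul !map_mxM trmxCK mulmxA.
have L2 : \tr (Ec *m Ec^t*) = \tr (N *m N^t*).
  rewrite Ns /N !mulmxA -[Q *m Ec *m Q^t* *m Q]mulmxA QsQ mulmx1.
  by rewrite [RHS]mxtrace_mulC !mulmxA QsQ mul1mx.
have Wt : W^t* = P *m Q^t* by rewrite /W trmx_mul map_mxM trmxCK.
have NE : N = W *m DX *m W^t* - DY.
  rewrite /N EcE mulmxBr mulmxBl Wt /W; congr (_ - _); first by rewrite !mulmxA.
  by rewrite !mulmxA QQ mul1mx -mulmxA QQ mulmx1.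
have dxr : (\row_i real_complex R (xs i)) ^ conjC = \row_i real_complex R (xs i).
  by apply/rowP => k; rewrite !mxE cr.
have dyr : (\row_i real_complex R (ys i)) ^ conjC = \row_i real_complex R (ys i).
  by apply/rowP => k; rewrite !mxE cr.
rewrite L1 L2 NE trace_id // rmorph_sum; apply: eq_bigr => i _.
rewrite rmorph_sum; apply: eq_bigr => k _.
by rewrite rmorphM -SE !mxE -rmorphB -rmorphXn.
Qed.
End Frob.

Unset Implicit Arguments.

Theorem mainTheorem8 (R : realType) (d L : nat) (blk : 'I_d -> 'I_L)
  (H : 'M[R]_d) (alpha : R) (sH sB : seq R) :
  {homo blk : i j / (i <= j)%N >-> (i <= j)%N} ->
  psd H ->
  0 < \tr H ->
  1 < alpha ->
  eigvals_of H sH ->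
  eigvals_of (blkdiag_part blk H) sB ->
  let B := blkdiag_part blk H in
  let E := H - B in
  let T := \tr H in
  let Lam := Num.max (lmax sH) (lmax sB) in
  `| renyi_tilde alpha sH (\tr H) - renyi_tilde alpha sB (\tr B) |
    <= alpha * powR (Lam / T) (alpha - 1) * (Num.sqrt (d%:R) * frob E / T).
Proof.
move=> _ Hpsd trpos a1 eH eB; cbv zeta.
set B := blkdiag_part blk H; set T := \tr H; set Lam := Num.max (lmax sH) (lmax sB).
have [Hsym Hp] := Hpsd.
have Bsym : B^T = B.
  apply/matrixP => i j; rewrite /B !mxE eq_sym.
  by have /matrixP /(_ j i) := Hsym; rewrite mxE => ->.
have trB : \tr B = T.
  by rewrite /T /mxtrace; apply: eq_bigr => i _; rewrite /B mxE eqxx.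
rewrite trB.
have [P [xs [Pu HP pex]]] := spec Hsym eH.
have [Q [ys [Qu BQ pey]]] := spec Bsym eB.
have Hrow : forall v : 'rV[R]_d, 0 <= (v *m H *m v^T) 0 0.
  by move=> v; rewrite -{1}(trmxK v); apply: Hp.
have Brow := blk_psd blk Hpsd.
have xs_bd : forall k, 0 <= xs k <= Lam.
  move=> k; have xin : xs k \in sH by rewrite (perm_mem pex) map_f ?mem_enum.
  rewrite (eig_nonneg Hrow eH xin) /=.
  by apply: le_trans (lmax_ge xin) _; rewrite le_max lexx.
have ys_bd : forall k, 0 <= ys k <= Lam.
  move=> k; have yin : ys k \in sB by rewrite (perm_mem pey) map_f ?mem_enum.
  rewrite (eig_nonneg Brow eB yin) /=.
  by apply: le_trans (lmax_ge yin) _; rewrite le_max lexx orbT.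
have sumH : renyi_tilde alpha sH T = \sum_k powR (xs k / T) alpha.
  by rewrite /renyi_tilde (perm_big _ pex) big_map big_enum.
have sumB : renyi_tilde alpha sB T = \sum_k powR (ys k / T) alpha.
  by rewrite /renyi_tilde (perm_big _ pey) big_map big_enum.
rewrite sumH sumB.
have [S [S0 Srow Scol SE]] := frob_identity Pu Qu HP BQ.
have K := key_real S0 Srow Scol xs_bd ys_bd trpos a1.
by rewrite /frob SE.
Qed.
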